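(* There exist an S4 theorem $A$ and an LP formula $B$ such that $A$ has no prehistoric-cycle-free G3s proof, $B^\circ = A$, and $\mathrm{LP}(\mathrm{CS}^\odot)\vdash B$. Specifically, one may take $A := \Box(P\land\lnot\Box P\to P)\to\lnot\Box(P\land\lnot\Box P)$ and $B := y{:}(P\land\lnot (y\cdot x){:}P\to P)\to\lnot x{:}(P\land\lnot (y\cdot x){:}P)$, for an atom $P$ and distinct variables $x,y$.
   Context: LP terms: $t ::= c \mid x \mid t_0\cdot t_1 \mid t_0+t_1 \mid\ !t$; LP formulas: $A ::= \bot \mid P \mid A_0\to A_1 \mid t{:}A$; $\lnot A := A\to\bot$, $\land$ a classical abbreviation. LP: axioms A0 (classical propositional schemes), A1 $t{:}F\to F$, A2 $s{:}(F\to G)\to(t{:}F\to(s\cdot t){:}G)$, A3 $t{:}F\to\ !t{:}(t{:}F)$, A4 $s{:}F\to(s+t){:}F$, $t{:}F\to(s+t){:}F$; rules modus ponens and axiom necessitation ($A\vdash c{:}A$ for $A$ an axiom, $c$ a constant). A constant specification CS is a set of formulas $c{:}A$ with $c$ a constant and $A$ an axiom; LP(CS) restricts axiom necessitation to members of CS. CS is self-referential if there are $c_0{:}A_0,\dots,c_{n-1}{:}A_{n-1}\in\mathrm{CS}$ ($n\ge1$) with $c_{(k+1)\bmod n}$ occurring in $A_k$ for all $k$. $\mathrm{LP}(\mathrm{CS}^\odot)\vdash B$ means $\mathrm{LP}(\mathrm{CS})\vdash B$ for some non-self-referential CS. Forgetful projection: $(t{:}A)^\circ=\Box A^\circ$,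 commuting with $\to$, atoms, $\bot$. G3s is the cut-free sequent calculus for S4 with rules (Ax) $P,\Gamma\supset\Delta,P$; $(\bot\supset)$; $(\to\supset)$; $(\supset\to)$; $(\Box\supset)$ from $A,\Box A,\Gamma\supset\Delta$ infer $\Box A,\Gamma\supset\Delta$; $(\supset\Box)$ from $\Box\Gamma\supset A$ infer $\Gamma',\Box\Gamma\supset\Delta',\Box A$ (plus standard rules for $\lnot,\land$ if these are primitive). Families are equivalence classes of $\Box$-occurrences under correspondence (side-formula occurrences correspond from premise to conclusion; active formulas correspond to their topmost occurrence as subformula of the principal formula, symbolwise; closed reflexively, symmetrically, transitively). $i\prec j$ if some $(\supset\Box)$ rule whose principal $\Box A$ has outermost $\Box$ in family $j$ has a premise containing a $\Box$ of family $i$; a G3s proof is prehistoric-cycle-free if there is no $i_0\prec\cdots\prec i_{n-1}\prec i_0$ ($n\ge1$). A G3s proof of $A$ means a proof of the sequent $\supset A$. *)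

(* Defs.v *)
From Stdlib Require Import List Arith Relations.
Import ListNotations.

Inductive mform : Type :=
| MBot : mform
| MAtom : nat -> mform
| MImp : mform -> mform -> mform
| MBox : mform -> mform.

Definition mneg (A : mform) : mform := MImp A MBot.
Definition mand (A B : mform) : mform := mneg (MImp A (mneg B)).

Inductive s4_axiom : mform -> Prop :=
| s4_K1 A B : s4_axiom (MImp A (MImp B A))
| s4_S A B C : s4_axiom (MImp (MImp A (MImp B C)) (MImp (MImp A B) (MImp A C)))
| s4_DN A : s4_axiom (MImp (mneg (mneg A)) A)
| s4_K A B : s4_axiom (MImp (MBox (MImp A B)) (MImp (MBox A) (MBox B)))
| s4_T A : s4_axiom (MImp (MBox A) A)
| s4_4 A : s4_axiom (MImp (MBox A) (MBox (MBox A))).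

Inductive s4_thm : mform -> Prop :=
| s4_ax A : s4_axiom A -> s4_thm A
| s4_mp A B : s4_thm (MImp A B) -> s4_thm A -> s4_thm B
| s4_nec A : s4_thm A -> s4_thm (MBox A).

(* subformula at a position: 0 = left/only child, 1 = right child *)
Fixpoint msub (F : mform) (p : list nat) : option mform :=
  match p with
  | [] => Some F
  | d :: p' =>
      match F, d with
      | MImp a _, O => msub a p'
      | MImp _ b, S O => msub b p'
      | MBox a, O => msub a p'
      | _, _ => None
      end
  end.

(* sequent Gamma ⊃ Delta : (antecedent, succedent) *)
Definition seqt : Type := (list mform * list mform)%type.

Definition seq_side (s : seqt) (b : bool) : list mform :=
  if b then fst s else snd s.  (* true = antecedent, false = succedent *)

(* rule descriptors; the nat is the index of the principal formula *)
Inductive g3rule : Type :=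
| RAx : g3rule
| RBotL : g3rule
| RImpL : nat -> g3rule
| RImpR : nat -> g3rule
| RBoxL : nat -> g3rule
| RBoxR : list nat -> nat -> g3rule.  (* selected indices of []Gamma, principal index *)

Definition rule_ok (r : g3rule) (s : seqt) (prem : list seqt) : Prop :=
  let G := fst s in let D := snd s in
  match r with
  | RAx => prem = [] /\
      exists i j p, nth_error G i = Some (MAtom p) /\ nth_error D j = Some (MAtom p)
  | RBotL => prem = [] /\ exists i, nth_error G i = Some MBot
  | RImpL n => exists a b, nth_error G n = Some (MImp a b) /\
      prem = [ (firstn n G ++ skipn (S n) G, D ++ [a]) ;
               (firstn n G ++ b :: skipn (S n) G, D) ]
  | RImpR n => exists a b, nth_error D n = Some (MImp a b) /\
      prem = [ (a :: G, firstn n D ++ b :: skipn (S n) D) ]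
  | RBoxL n => exists a, nth_error G n = Some (MBox a) /\
      prem = [ (firstn n G ++ a :: MBox a :: skipn (S n) G, D) ]
  | RBoxR sel n => exists a, nth_error D n = Some (MBox a) /\ NoDup sel /\
      (forall k, In k sel -> exists c, nth_error G k = Some (MBox c)) /\
      prem = [ (map (fun k => nth k G MBot) sel, [a]) ]
  end.

(* Correspondence from the formula at (side b, index i) of premise number k
   to (side, index, position-prefix) in the conclusion.  Side formulas map
   to themselves (prefix []), active formulas to their occurrence as
   subformula of the principal formula. *)
Definition origin (r : g3rule) (s : seqt) (k : nat) (b : bool) (i : nat)
  : option (bool * nat * list nat) :=
  let G := fst s in let D := snd s in
  match r, k with
  | RImpL n, O =>
      if b then (if i <? n then Some (true, i, []) else Some (true, S i, []))
      else (if i <? length D then Some (false, i, [])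
            else if i =? length D then Some (true, n, [0]) else None)
  | RImpL n, S O =>
      if b then (if i =? n then Some (true, n, [1]) else Some (true, i, []))
      else Some (false, i, [])
  | RImpR n, O =>
      if b then (match i with O => Some (false, n, [0]) | S i' => Some (true, i', []) end)
      else (if i =? n then Some (false, n, [1]) else Some (false, i, []))
  | RBoxL n, O =>
      if b then (if i <? n then Some (true, i, [])
                 else if i =? n then Some (true, n, [0])
                 else if i =? S n then Some (true, n, [])
                 else Some (true, pred i, []))
      else Some (false, i, [])
  | RBoxR sel n, O =>
      if b then Some (true, nth i sel 0, [])
      else (match i with O => Some (false, n, [0]) | _ => None end)
  | _, _ => None
  end.

Inductive ptree : Type :=
| PNode : seqt -> g3rule -> list ptree -> ptree.

Definition root (t : ptree) : seqt := match t with PNode s _ _ => s end.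

Fixpoint valid (t : ptree) : Prop :=
  match t with
  | PNode s r ch =>
      rule_ok r s (map root ch) /\
      (fix all (l : list ptree) : Prop :=
         match l with [] => True | t' :: l' => valid t' /\ all l' end) ch
  end.

Fixpoint subtree_at (t : ptree) (q : list nat) : option ptree :=
  match q with
  | [] => Some t
  | k :: q' =>
      match t with
      | PNode _ _ ch =>
          match nth_error ch k with Some t' => subtree_at t' q' | None => None end
      end
  end.

(* an occurrence: node (path from the root), side, formula index, position *)
Record occ : Type := Occ { o_node : list nat; o_side : bool; o_idx : nat; o_pos : list nat }.

Definition box_occ (t : ptree) (o : occ) : Prop :=
  exists t' F A, subtree_at t (o_node o) = Some t' /\
    nth_error (seq_side (root t') (o_side o)) (o_idx o) = Some F /\
    msub F (o_pos o) = Some (MBox A).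

(* one-step correspondence: o1 in a premise, o2 in the conclusion *)
Definition corr1 (t : ptree) (o1 o2 : occ) : Prop :=
  box_occ t o1 /\ box_occ t o2 /\
  exists q k s r ch b' i' pre,
    subtree_at t q = Some (PNode s r ch) /\
    o_node o1 = q ++ [k] /\ o_node o2 = q /\
    origin r s k (o_side o1) (o_idx o1) = Some (b', i', pre) /\
    o_side o2 = b' /\ o_idx o2 = i' /\ o_pos o2 = pre ++ o_pos o1.

Definition same_family (t : ptree) : relation occ := clos_refl_sym_trans occ (corr1 t).

Definition prec (t : ptree) (o1 o2 : occ) : Prop :=
  exists q s sel n ch,
    subtree_at t q = Some (PNode s (RBoxR sel n) ch) /\
    same_family t o2 (Occ q false n []) /\
    exists o, box_occ t o /\ o_node o = q ++ [0] /\ same_family t o1 o.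

Definition prehistoric_cycle_free (t : ptree) : Prop :=
  ~ exists o, clos_trans occ (prec t) o o.

Definition has_pcf_g3s_proof (A : mform) : Prop :=
  exists t, valid t /\ root t = ([], [A]) /\ prehistoric_cycle_free t.

Inductive lterm : Type :=
| LConst : nat -> lterm
| LVar : nat -> lterm
| LApp : lterm -> lterm -> lterm
| LSum : lterm -> lterm -> lterm
| LBang : lterm -> lterm.

Inductive lform : Type :=
| LBot : lform
| LAtom : nat -> lform
| LImp : lform -> lform -> lform
| LPf : lterm -> lform -> lform.   (* t : A *)

Definition lneg (A : lform) : lform := LImp A LBot.
Definition land (A B : lform) : lform := lneg (LImp A (lneg B)).

Inductive lp_axiom : lform -> Prop :=
| lp_K1 A B : lp_axiom (LImp A (LImp B A))
| lp_S A B C : lp_axiom (LImp (LImp A (LImp B C)) (LImp (LImp A B) (LImp A C)))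
| lp_DN A : lp_axiom (LImp (lneg (lneg A)) A)
| lp_A1 t F : lp_axiom (LImp (LPf t F) F)
| lp_A2 s t F G : lp_axiom (LImp (LPf s (LImp F G)) (LImp (LPf t F) (LPf (LApp s t) G)))
| lp_A3 t F : lp_axiom (LImp (LPf t F) (LPf (LBang t) (LPf t F)))
| lp_A4l s t F : lp_axiom (LImp (LPf s F) (LPf (LSum s t) F))
| lp_A4r s t F : lp_axiom (LImp (LPf t F) (LPf (LSum s t) F)).

(* a constant specification: a set of pairs (c, A), read as c:A *)
Definition const_spec : Type := nat -> lform -> Prop.

Definition is_CS (CS : const_spec) : Prop := forall c A, CS c A -> lp_axiom A.

Inductive lp_deriv (CS : const_spec) : lform -> Prop :=
| ld_ax A : lp_axiom A -> lp_deriv CS A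
| ld_mp A B : lp_deriv CS (LImp A B) -> lp_deriv CS A -> lp_deriv CS B
| ld_nec c A : CS c A -> lp_deriv CS (LPf (LConst c) A).

Fixpoint tconst_in (c : nat) (t : lterm) : Prop :=
  match t with
  | LConst d => c = d
  | LVar _ => False
  | LApp s u | LSum s u => tconst_in c s \/ tconst_in c u
  | LBang s => tconst_in c s
  end.

Fixpoint fconst_in (c : nat) (A : lform) : Prop :=
  match A with
  | LBot | LAtom _ => False
  | LImp a b => fconst_in c a \/ fconst_in c b
  | LPf t a => tconst_in c t \/ fconst_in c a
  end.

Definition self_referential (CS : const_spec) : Prop :=
  exists (n : nat) (c : nat -> nat) (F : nat -> lform),
    0 < n /\ (forall k, k < n -> CS (c k) (F k)) /\
    (forall k, k < n -> fconst_in (c (S k mod n)) (F k)).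

Definition lp_nonselfref_provable (B : lform) : Prop :=
  exists CS, is_CS CS /\ ~ self_referential CS /\ lp_deriv CS B.

Fixpoint forget (A : lform) : mform :=
  match A with
  | LBot => MBot
  | LAtom p => MAtom p
  | LImp a b => MImp (forget a) (forget b)
  | LPf _ a => MBox (forget a)
  end.

Definition A_ex (P : nat) : mform :=
  MImp (MBox (MImp (mand (MAtom P) (mneg (MBox (MAtom P)))) (MAtom P)))
       (mneg (MBox (mand (MAtom P) (mneg (MBox (MAtom P)))))).

Definition B_ex (P x y : nat) : lform :=
  LImp (LPf (LVar y) (LImp (land (LAtom P) (lneg (LPf (LApp (LVar y) (LVar x)) (LAtom P))))
                          (LAtom P)))
       (lneg (LPf (LVar x) (land (LAtom P) (lneg (LPf (LApp (LVar y) (LVar x)) (LAtom P)))))).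

(* Main.v *)
Require Import Defs.
From Stdlib Require Import List Arith Relations Lia Bool Classical.
Import ListNotations.

Lemma nth_del {X} (G : list X) n i : n < length G ->
  nth_error (firstn n G ++ skipn (S n) G) i = nth_error G (if i <? n then i else S i).
Proof.
  revert G i; induction n; intros G i H; destruct G as [|g G]; simpl in *; try lia.
  - destruct i; reflexivity.
  - destruct i; simpl; auto. rewrite IHn by lia.
    destruct (i <? n) eqn:E; destruct (S i <? S n) eqn:E2; auto;
    apply Nat.ltb_lt in E || apply Nat.ltb_ge in E;
    apply Nat.ltb_lt in E2 || apply Nat.ltb_ge in E2; lia.
Qed.

Lemma nth_rep {X} (G : list X) n i x : n < length G ->
  nth_error (firstn n G ++ x :: skipn (S n) G) i = if i =? n then Some x else nth_error G i.
Proof.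
  revert G i; induction n; intros G i H; destruct G as [|g G]; simpl in *; try lia.
  - destruct i; reflexivity.
  - destruct i; simpl; auto. rewrite IHn by lia. reflexivity.
Qed.

Lemma nth_rep2 {X} (G : list X) n i x y : n < length G ->
  nth_error (firstn n G ++ x :: y :: skipn (S n) G) i =
  if i <? n then nth_error G i else if i =? n then Some x else if i =? S n then Some y
  else nth_error G (pred i).
Proof.
  revert G i; induction n; intros G i H; destruct G as [|g G]; simpl in *; try lia.
  - destruct i as [|[|i]]; simpl; auto.
  - destruct i; simpl; auto. rewrite IHn by lia.
    destruct i as [|i]; simpl; auto. destruct n; reflexivity.
Qed.

Lemma nth_app_last {X} (D : list X) a i :
  nth_error (D ++ [a]) i = if i <? length D then nth_error D i else if i =? length D then Some a else None.
Proof.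
  revert i; induction D; intros i; simpl.
  - destruct i as [|[|i]]; reflexivity.
  - destruct i; simpl; auto.
Qed.

Fixpoint pol (F : mform) (p : list nat) {struct p} : bool :=
  match p with
  | [] => false
  | d :: p' =>
      match F, d with
      | MImp a _, O => negb (pol a p')
      | MImp _ b, S O => pol b p'
      | MBox a, O => pol a p'
      | _, _ => false
      end
  end.

Lemma msub_app F pre pos G : msub F pre = Some G -> msub F (pre ++ pos) = msub G pos.
Proof.
  revert F; induction pre as [|d pre IH]; intros F H; simpl in *.
  - destruct F; simpl in H; inversion H; reflexivity.
  - destruct F; try discriminate; destruct d as [|[|d]]; try discriminate; apply IH; assumption.
Qed.

Lemma pol_app F pre pos G : msub F pre = Some G -> pol F (pre ++ pos) = xorb (pol F pre) (pol G pos).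
Proof.
  revert F; induction pre as [|d pre IH]; intros F H; simpl in *.
  - destruct F; simpl in H; inversion H; subst; reflexivity.
  - destruct F; try discriminate; destruct d as [|[|d]]; try discriminate; auto.
    rewrite (IH _ H). destruct (pol F1 pre), (pol G pos); reflexivity.
Qed.

Lemma msub_nil F : msub F [] = Some F.
Proof. destruct F; reflexivity. Qed.
#[export] Hint Resolve msub_nil : core.

Lemma nth_lt {X} (G : list X) n x : nth_error G n = Some x -> n < length G.
Proof. intros H. apply nth_error_Some. congruence. Qed.

Ltac bcase E := first [apply Nat.ltb_lt in E | apply Nat.ltb_ge in E | apply Nat.eqb_eq in E | apply Nat.eqb_neq in E].

Ltac fin := (do 4 eexists; split; [reflexivity|]; split; [simpl; eassumption|]; simpl; auto).

Lemma origin_ok r s prem k s1 b i F :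
  rule_ok r s prem -> nth_error prem k = Some s1 -> nth_error (seq_side s1 b) i = Some F ->
  exists b' i' pre F', origin r s k b i = Some (b', i', pre) /\
    nth_error (seq_side s b') i' = Some F' /\ msub F' pre = Some F /\ xorb b' (pol F' pre) = b.
Proof.
  destruct s as [G D]. intros Hr Hk Hi.
  destruct r; cbn [rule_ok fst snd] in Hr.
  - destruct Hr as [-> _]. destruct k; discriminate.
  - destruct Hr as [-> _]. destruct k; discriminate.
  - destruct Hr as [a [b0 [Hn ->]]]. pose proof (nth_lt _ _ _ Hn) as Hl. remember (skipn (S n) G) as R eqn:ER.
    destruct k as [|[|k]]; cbn [nth_error] in Hk; try (injection Hk as <-); subst R.
    + destruct b; cbn [origin seq_side fst snd] in Hi |- *.
      * rewrite nth_del in Hi by lia.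
        destruct (i <? n) eqn:E; fin.
      * rewrite nth_app_last in Hi.
        destruct (i <? length D) eqn:E; [fin|].
        destruct (i =? length D) eqn:E2; [|discriminate]. inversion Hi; subst.
        fin.
    + destruct b; cbn [origin seq_side fst snd] in Hi |- *.
      * rewrite nth_rep in Hi by lia.
        destruct (i =? n) eqn:E; [inversion Hi; subst; bcase E; subst|];
          fin.
      * fin.
    + destruct k; discriminate.
  - destruct Hr as [a [b0 [Hn ->]]]. pose proof (nth_lt _ _ _ Hn) as Hl. remember (skipn (S n) D) as R eqn:ER.
    destruct k as [|k]; cbn [nth_error] in Hk; try (injection Hk as <-); subst R; [|destruct k; discriminate].
    destruct b; cbn [origin seq_side fst snd] in Hi |- *.
    + destruct i as [|i]; simpl in Hi.
      * inversion Hi; subst. fin.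
      * fin.
    + rewrite nth_rep in Hi by lia.
      destruct (i =? n) eqn:E; [inversion Hi; subst; bcase E; subst|];
        fin.
  - destruct Hr as [a [Hn ->]]. pose proof (nth_lt _ _ _ Hn) as Hl. remember (skipn (S n) G) as R eqn:ER.
    destruct k as [|k]; cbn [nth_error] in Hk; try (injection Hk as <-); subst R; [|destruct k; discriminate].
    destruct b; cbn [origin seq_side fst snd] in Hi |- *.
    + rewrite nth_rep2 in Hi by lia.
      destruct (i <? n) eqn:E1; [fin|].
      destruct (i =? n) eqn:E2; [inversion Hi; subst; fin|].
      destruct (i =? S n) eqn:E3; [inversion Hi; subst; fin|].
      fin.
    + fin.
  - destruct Hr as [a [Hn [_ [Hsel ->]]]].
    destruct k as [|k]; cbn [nth_error] in Hk; try (injection Hk as <-); [|destruct k; discriminate].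
    destruct b; cbn [origin seq_side fst snd] in Hi |- *.
    + rewrite nth_error_map in Hi. destruct (nth_error l i) as [kk|] eqn:E; [|discriminate].
      simpl in Hi. inversion Hi; subst.
      rewrite (nth_error_nth _ _ _ E).
      destruct (Hsel kk (nth_error_In _ _ E)) as [c Hc].
      do 4 eexists; split; [reflexivity|]. simpl. rewrite Hc. rewrite (nth_error_nth _ _ _ Hc). eauto.
    + destruct i as [|i]; simpl in Hi; [|destruct i; discriminate].
      inversion Hi; subst. fin.
Qed.

Lemma subtree_app t q k u : subtree_at t (q ++ [k]) = Some u ->
  exists s r ch, subtree_at t q = Some (PNode s r ch) /\ nth_error ch k = Some u.
Proof.
  revert t; induction q as [|j q IH]; intros t H; simpl in *.
  - destruct t as [s r ch]. exists s, r, ch. split; auto.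
    destruct (nth_error ch k); [|discriminate]. destruct p; simpl in H; congruence.
  - destruct t as [s r ch]. destruct (nth_error ch j); [|discriminate]. auto.
Qed.

Lemma subtree_app' t q k s r ch u : subtree_at t q = Some (PNode s r ch) -> nth_error ch k = Some u ->
  subtree_at t (q ++ [k]) = Some u.
Proof.
  revert t; induction q as [|j q IH]; intros t H1 H2; simpl in *.
  - inversion H1; subst. rewrite H2. destruct u; reflexivity.
  - destruct t as [s0 r0 ch0]. destruct (nth_error ch0 j); [|discriminate]. eauto.
Qed.

Lemma valid_child s r ch k u : valid (PNode s r ch) -> nth_error ch k = Some u -> valid u.
Proof.
  intros [_ H]. revert k H; induction ch as [|c ch IH]; intros k H Hk.
  - destruct k; discriminate.
  - destruct H as [H1 H2]. destruct k; simpl in Hk.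
    + inversion Hk; subst; auto.
    + eauto.
Qed.

Lemma valid_sub t q u : valid t -> subtree_at t q = Some u -> valid u.
Proof.
  revert t; induction q as [|j q IH]; intros t Hv H; simpl in *.
  - destruct t; inversion H; subst; auto.
  - destruct t as [s r ch]. destruct (nth_error ch j) eqn:E; [|discriminate].
    eapply IH; [|exact H]. eapply valid_child; eauto.
Qed.

Lemma trace t A (Hv : valid t) (Hr : root t = ([], [A])) : forall q u,
  subtree_at t q = Some u -> forall b i F pos X,
  nth_error (seq_side (root u) b) i = Some F -> msub F pos = Some (MBox X) ->
  exists p, clos_refl_trans occ (corr1 t) (Occ q b i pos) (Occ [] false 0 p) /\
    msub A p = Some (MBox X) /\ xorb b (pol F pos) = pol A p.
Proof.
  induction q as [|k q IH] using rev_ind; intros u Hu b i F pos X Hi Hm.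
  - destruct t as [s0 r0 ch0]. simpl in Hu. inversion Hu; subst u. rewrite Hr in Hi.
    destruct b; simpl in Hi; [destruct i; discriminate|].
    destruct i as [|i]; [|destruct i; discriminate]. simpl in Hi. inversion Hi; subst.
    exists pos. split; [apply rt_refl|]. split; auto.
  - destruct (subtree_app _ _ _ _ Hu) as [s [r [ch [Hq Hk]]]].
    pose proof (valid_sub _ _ _ Hv Hq) as Hvq. destruct Hvq as [Hrule _].
    assert (Hk' : nth_error (map root ch) k = Some (root u)) by (rewrite nth_error_map, Hk; reflexivity).
    destruct (origin_ok _ _ _ _ _ _ _ _ Hrule Hk' Hi) as [b' [i' [pre [F' [Ho [Hi' [Hm' Hs]]]]]]].
    assert (Hm2 : msub F' (pre ++ pos) = Some (MBox X)) by (rewrite (msub_app _ _ _ _ Hm'); exact Hm).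
    destruct (IH _ Hq b' i' F' (pre ++ pos) X Hi' Hm2) as [p [Hrt [HA Hsg]]].
    exists p. split; [|split; auto].
    + eapply rt_trans; [|exact Hrt]. apply rt_step.
      split; [exists u, F, X; auto|]. split; [exists (PNode s r ch), F', X; auto|].
      exists q, k, s, r, ch, b', i', pre. simpl. repeat split; auto.
    + rewrite <- Hsg. rewrite (pol_app _ _ _ _ Hm'). rewrite <- Hs.
      destruct b', (pol F' pre), (pol F pos); reflexivity.
Qed.

Definition CC (P : nat) : mform := mand (MAtom P) (mneg (MBox (MAtom P))).

Definition pf2 : list nat := [1;0;0;0;1;0;0].

Lemma msI0 a b p : msub (MImp a b) (0 :: p) = msub a p. Proof. reflexivity. Qed.
Lemma msI1 a b p : msub (MImp a b) (1 :: p) = msub b p. Proof. reflexivity. Qed.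
Lemma msI2 a b d p : msub (MImp a b) (S (S d) :: p) = None. Proof. reflexivity. Qed.
Lemma msB0 a p : msub (MBox a) (0 :: p) = msub a p. Proof. reflexivity. Qed.
Lemma msB1 a d p : msub (MBox a) (S d :: p) = None. Proof. reflexivity. Qed.
Lemma msA n d p : msub (MAtom n) (d :: p) = None. Proof. reflexivity. Qed.
Lemma msBot d p : msub MBot (d :: p) = None. Proof. reflexivity. Qed.

Ltac go := match goal with H : msub _ ?p = _ |- _ => is_var p;
  let d := fresh "d" in let q := fresh "q" in
  destruct p as [|d q];
  [ simpl in *; first [discriminate | reflexivity]
  | destruct d as [|[|d]]; rewrite ?msI0, ?msI1, ?msI2, ?msB0, ?msB1, ?msA, ?msBot in H;
    try discriminate; go ] end.

Lemma pos_unique P p X : msub (A_ex P) p = Some (MBox X) -> pol (A_ex P) p = false -> p = pf2.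
Proof. unfold A_ex, mand, mneg, pf2. intros H H2. go. Qed.

Definition mform_eq_dec (x y : mform) : {x = y} + {x <> y}.
Proof. decide equality; apply Nat.eq_dec. Defined.

Fixpoint tr (P : nat) (F : mform) : mform :=
  match F with
  | MBox a => if mform_eq_dec a (CC P) then tr P a else MBox (tr P a)
  | MImp a b => MImp (tr P a) (tr P b)
  | x => x
  end.

Fixpoint fb (w : bool) (F : mform) : bool :=
  match F with
  | MBot => false
  | MAtom _ => negb w
  | MImp a b => implb (fb w a) (fb w b)
  | MBox a => fb true a && (if w then true else fb false a)
  end.

Definition ptree_ind' (Q : ptree -> Prop)
  (H : forall s r ch, Forall Q ch -> Q (PNode s r ch)) : forall t, Q t :=
  fix go (t : ptree) : Q t :=
    match t with
    | PNode s r ch => H s r ch ((fix f (l : list ptree) : Forall Q l :=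
        match l with [] => Forall_nil _ | x :: l' => Forall_cons _ (go x) (f l') end) ch)
    end.

Definition good (P : nat) (t : ptree) : Prop :=
  forall q s sel n ch, subtree_at t q = Some (PNode s (RBoxR sel n) ch) ->
  forall k, In k sel -> nth k (fst s) MBot <> MBox (CC P).

Lemma good_child P s r ch j c : good P (PNode s r ch) -> nth_error ch j = Some c -> good P c.
Proof.
  intros H Hj q s' sel n ch' Hq. apply (H (j :: q) s' sel n ch'). simpl. rewrite Hj. exact Hq.
Qed.

Lemma in_firstn {X} (x : X) n l : In x (firstn n l) -> In x l.
Proof. intros H. rewrite <- (firstn_skipn n l). apply in_or_app; auto. Qed.
Lemma in_skipn {X} (x : X) n l : In x (skipn n l) -> In x l.
Proof. intros H. rewrite <- (firstn_skipn n l). apply in_or_app; auto. Qed.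

Lemma in_del {X} (x : X) n l : In x (firstn n l ++ skipn (S n) l) -> In x l.
Proof. intros H. apply in_app_or in H as [H|H]; [eapply in_firstn|eapply in_skipn]; eauto. Qed.
Lemma in_rep {X} (x y : X) n l : In x (firstn n l ++ y :: skipn (S n) l) -> x = y \/ In x l.
Proof.
  intros H. apply in_app_or in H as [H|[H|H]]; [right; eapply in_firstn|left; auto|right; eapply in_skipn]; eauto.
Qed.
Lemma in_rep2 {X} (x y z : X) n l : In x (firstn n l ++ y :: z :: skipn (S n) l) -> x = y \/ x = z \/ In x l.
Proof.
  intros H. apply in_app_or in H as [H|[H|[H|H]]];
    [right; right; eapply in_firstn|left; auto|right; left; auto|right; right; eapply in_skipn]; eauto.
Qed.

Lemma box_T P w a : fb w (tr P (MBox a)) = true -> fb w (tr P a) = true.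
Proof.
  simpl. destruct mform_eq_dec; auto. simpl. destruct w; simpl.
  - rewrite andb_true_r; auto.
  - intros H. apply andb_true_iff in H; tauto.
Qed.

Lemma box_up w y : fb w (MBox y) = true -> fb true (MBox y) = true.
Proof. simpl. intros H. apply andb_true_iff in H as [H _]. rewrite H; reflexivity. Qed.

Lemma sound P : forall t, valid t -> good P t -> forall w,
  (forall F, In F (fst (root t)) -> fb w (tr P F) = true) ->
  exists F, In F (snd (root t)) /\ fb w (tr P F) = true.
Proof.
  induction t as [[G D] r ch IH] using ptree_ind'.
  intros Hv Hg w HG. simpl in HG |- *.
  pose proof (fun j c (Hj : nth_error ch j = Some c) => valid_child _ _ _ _ _ Hv Hj) as Hvc.
  pose proof (fun j c (Hj : nth_error ch j = Some c) => good_child _ _ _ _ _ _ Hg Hj) as Hgc.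
  pose proof (fun j c (Hj : nth_error ch j = Some c) =>
                proj1 (Forall_forall _ _) IH c (nth_error_In _ _ Hj)) as IHc.
  destruct Hv as [Hr _].
  destruct r; cbn [rule_ok fst snd] in Hr.
  - destruct Hr as [_ [i [j [p [Hi Hj]]]]].
    exists (MAtom p). split; [eapply nth_error_In; eauto|].
    apply HG. eapply nth_error_In; eauto.
  - destruct Hr as [_ [i Hi]]. specialize (HG _ (nth_error_In _ _ Hi)). discriminate.
  - destruct Hr as [a [b [Hn Hch]]].
    destruct ch as [|c0 [|c1 [|]]]; try discriminate. injection Hch as E0 E1.
    assert (Himp := HG _ (nth_error_In _ _ Hn)). simpl in Himp.
    destruct (fb w (tr P a)) eqn:Ea.
    + simpl in Himp.
      destruct (IHc 1 c1 eq_refl (Hvc 1 c1 eq_refl) (Hgc 1 c1 eq_refl) w) as [F [HF1 HF2]].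
      * rewrite E1. simpl. intros F HF. apply in_rep in HF as [->|HF]; auto.
      * rewrite E1 in HF1. exists F; auto.
    + destruct (IHc 0 c0 eq_refl (Hvc 0 c0 eq_refl) (Hgc 0 c0 eq_refl) w) as [F [HF1 HF2]].
      * rewrite E0. simpl. intros F HF. apply in_del in HF; auto.
      * rewrite E0 in HF1. simpl in HF1. apply in_app_or in HF1 as [HF1|[<-|[]]].
        -- exists F; auto.
        -- congruence.
  - destruct Hr as [a [b [Hn Hch]]].
    destruct ch as [|c0 [|]]; try discriminate. injection Hch as E0.
    destruct (fb w (tr P a)) eqn:Ea.
    + destruct (IHc 0 c0 eq_refl (Hvc 0 c0 eq_refl) (Hgc 0 c0 eq_refl) w) as [F [HF1 HF2]].
      * rewrite E0. simpl. intros F [<-|HF]; auto.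
      * rewrite E0 in HF1. simpl in HF1. apply in_rep in HF1 as [->|HF1].
        -- exists (MImp a b). split; [eapply nth_error_In; eauto|]. simpl. rewrite HF2, Ea. reflexivity.
        -- exists F; auto.
    + exists (MImp a b). split; [eapply nth_error_In; eauto|]. simpl. rewrite Ea. reflexivity.
  - destruct Hr as [a [Hn Hch]].
    destruct ch as [|c0 [|]]; try discriminate. injection Hch as E0.
    assert (Hb := HG _ (nth_error_In _ _ Hn)).
    destruct (IHc 0 c0 eq_refl (Hvc 0 c0 eq_refl) (Hgc 0 c0 eq_refl) w) as [F [HF1 HF2]].
    + rewrite E0. simpl. intros F HF. apply in_rep2 in HF as [->|[->|HF]]; auto.
      apply box_T; auto.
    + rewrite E0 in HF1. exists F; auto.
  - destruct Hr as [a [Hn [_ [Hsel Hch]]]].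
    destruct ch as [|c0 [|]]; try discriminate. injection Hch as E0.
    assert (Hprem : forall v, (v = w \/ v = true) -> fb v (tr P a) = true).
    { intros v Hv.
      destruct (IHc 0 c0 eq_refl (Hvc 0 c0 eq_refl) (Hgc 0 c0 eq_refl) v) as [F [HF1 HF2]].
      - rewrite E0. simpl. intros F HF. apply in_map_iff in HF as [k [<- Hk]].
        destruct (Hsel k Hk) as [c Hc]. rewrite (nth_error_nth _ _ _ Hc).
        assert (Hne : c <> CC P).
        { intros ->. apply (Hg [] (G, D) l n [c0] eq_refl k Hk). simpl. apply nth_error_nth; auto. }
        assert (Hgc' := HG _ (nth_error_In _ _ Hc)). simpl in Hgc' |- *.
        destruct mform_eq_dec; [contradiction|].
        destruct Hv as [ -> | -> ]; auto. eapply box_up; exact Hgc'.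
      - rewrite E0 in HF1. simpl in HF1. destruct HF1 as [<-|[]]. exact HF2. }
    exists (MBox a). split; [eapply nth_error_In; eauto|].
    simpl. destruct mform_eq_dec; [auto|]. simpl.
    rewrite (Hprem true (or_intror eq_refl)). destruct w; simpl; auto.
Qed.

Lemma tr_imp P a b : tr P (MImp a b) = MImp (tr P a) (tr P b). Proof. reflexivity. Qed.
Lemma tr_atom P n : tr P (MAtom n) = MAtom n. Proof. reflexivity. Qed.
Lemma tr_bot P : tr P MBot = MBot. Proof. reflexivity. Qed.
Lemma tr_box_eq P : tr P (MBox (CC P)) = tr P (CC P).
Proof. change (tr P (MBox (CC P))) with (if mform_eq_dec (CC P) (CC P) then tr P (CC P) else MBox (tr P (CC P))).
  destruct (mform_eq_dec (CC P) (CC P)); [reflexivity|congruence]. Qed.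
Lemma tr_box_ne P a : a <> CC P -> tr P (MBox a) = MBox (tr P a).
Proof. intros H. change (tr P (MBox a)) with (if mform_eq_dec a (CC P) then tr P a else MBox (tr P a)).
  destruct (mform_eq_dec a (CC P)); [congruence|reflexivity]. Qed.

Lemma trC P : tr P (CC P) = CC P.
Proof.
  unfold CC, mand, mneg. rewrite !tr_imp, tr_box_ne, !tr_atom, !tr_bot; auto.
  unfold CC, mand, mneg. discriminate.
Qed.

Lemma trA P : fb false (tr P (A_ex P)) = false.
Proof.
  change (A_ex P) with (MImp (MBox (MImp (CC P) (MAtom P))) (mneg (MBox (CC P)))).
  unfold mneg. rewrite !tr_imp, tr_box_ne, tr_box_eq, tr_imp, trC, tr_atom, tr_bot.
  - reflexivity.
  - unfold CC, mand, mneg. congruence.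
Qed.

Lemma no_pcf P : ~ has_pcf_g3s_proof (A_ex P).
Proof.
  intros [t [Hv [Hr Hcf]]].
  destruct (classic (exists q s sel n ch k, subtree_at t q = Some (PNode s (RBoxR sel n) ch) /\
      In k sel /\ nth k (fst s) MBot = MBox (CC P))) as [Hbad|Hgood].
  - destruct Hbad as [q [[G D] [sel [n [ch [k [Hq [Hk HC]]]]]]]].
    apply Hcf.
    pose proof (valid_sub _ _ _ Hv Hq) as [Hrule _].
    cbn [rule_ok fst snd] in Hrule. destruct Hrule as [a [Hn [_ [Hsel Hch]]]].
    destruct ch as [|c0 [|]]; try discriminate. injection Hch as E0.
    destruct (In_nth_error _ _ Hk) as [i Hi].
    assert (Hc0 : subtree_at t (q ++ [0]) = Some c0) by (eapply subtree_app'; eauto).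
    assert (Hin : nth_error (seq_side (root c0) true) i = Some (MBox (CC P))).
    { rewrite E0. simpl. rewrite nth_error_map, Hi. simpl. simpl in HC. rewrite HC. reflexivity. }
    assert (Hm : msub (MBox (CC P)) [0;0;1;0;0] = Some (MBox (MAtom P))) by reflexivity.
    destruct (trace _ _ Hv Hr _ _ Hc0 true i _ _ _ Hin Hm) as [p1 [Hrt1 [Hm1 Hs1]]].
    assert (Hn' : nth_error (seq_side (root (PNode (G, D) (RBoxR sel n) [c0])) false) n = Some (MBox a)) by exact Hn.
    destruct (trace _ _ Hv Hr _ _ Hq false n _ [] _ Hn' (msub_nil _)) as [p2 [Hrt2 [Hm2 Hs2]]].
    assert (E1 : p1 = pf2) by (apply (pos_unique P p1 (MAtom P)); auto).
    assert (E2 : p2 = pf2) by (apply (pos_unique P p2 a); auto).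
    subst p1 p2.
    exists (Occ q false n []). apply t_step. exists q, (G, D), sel, n, [c0]. split; [exact Hq|]. split; [apply rst_refl|].
    exists (Occ (q ++ [0]) true i [0;0;1;0;0]). split; [|split; [reflexivity|]].
    + exists c0, (MBox (CC P)), (MAtom P). auto.
    + eapply rst_trans; [apply clos_rt_clos_rst; exact Hrt2|].
      apply rst_sym. apply clos_rt_clos_rst; exact Hrt1.
  - assert (Hg : good P t).
    { intros q s sel n ch Hq k Hk HC. apply Hgood. exists q, s, sel, n, ch, k. auto. }
    destruct (sound P t Hv Hg false) as [F [HF1 HF2]].
    + rewrite Hr. simpl. intros F [].
    + rewrite Hr in HF1. simpl in HF1. destruct HF1 as [<-|[]].
      rewrite trA in HF2. discriminate.
Qed.

Inductive mder (H : list mform) : mform -> Prop :=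
| md_hyp A : In A H -> mder H A
| md_ax A : s4_axiom A -> mder H A
| md_mp A B : mder H (MImp A B) -> mder H A -> mder H B.

Lemma mder_I H A : mder H (MImp A A).
Proof.
  eapply md_mp; [eapply md_mp; [apply md_ax, (s4_S A (MImp A A) A)|apply md_ax, s4_K1]|apply md_ax, (s4_K1 A A)].
Qed.

Lemma mded H A B : mder (A :: H) B -> mder H (MImp A B).
Proof.
  induction 1 as [C HC|C HC|C D _ IH1 _ IH2].
  - destruct HC as [<-|HC]; [apply mder_I|].
    eapply md_mp; [apply md_ax, s4_K1|apply md_hyp; auto].
  - eapply md_mp; [apply md_ax, s4_K1|apply md_ax; auto].
  - eapply md_mp; [eapply md_mp; [apply md_ax, s4_S|exact IH1]|exact IH2].
Qed.

Lemma mder_thm A : mder [] A -> s4_thm A.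
Proof.
  induction 1 as [C []|C HC|C D _ IH1 _ IH2].
  - apply s4_ax; auto.
  - eapply s4_mp; eauto.
Qed.

Lemma mweak H A H' : mder H A -> incl H H' -> mder H' A.
Proof. induction 1; intros Hi; [apply md_hyp; auto|apply md_ax; auto|eapply md_mp; eauto]. Qed.

Lemma s4A P : s4_thm (A_ex P).
Proof.
  apply mder_thm. unfold A_ex. apply mded. unfold mneg at 1. apply mded.
  set (C := mand (MAtom P) (mneg (MBox (MAtom P)))).
  assert (HbP : mder [MBox C; MBox (MImp C (MAtom P))] (MBox (MAtom P))).
  { eapply md_mp; [eapply md_mp; [apply md_ax, s4_K|apply md_hyp; simpl; auto]|apply md_hyp; simpl; auto]. }
  assert (HC : mder [MBox C; MBox (MImp C (MAtom P))] C).
  { eapply md_mp; [apply md_ax, s4_T|apply md_hyp; simpl; auto]. }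
  eapply md_mp; [exact HC|].
  apply mded. change (mder (MAtom P :: [MBox C; MBox (MImp C (MAtom P))]) (MImp (mneg (MBox (MAtom P))) MBot)).
  apply mded. apply (md_mp _ (MBox (MAtom P))); [apply md_hyp; simpl; auto|].
  eapply mweak; [exact HbP|]. intros z Hz; simpl in *; tauto.
Qed.

Inductive lder (H : list lform) : lform -> Prop :=
| ld_hyp A : In A H -> lder H A
| ld_ax' A : lp_axiom A -> lder H A
| ld_mp' A B : lder H (LImp A B) -> lder H A -> lder H B.

Lemma lder_I H A : lder H (LImp A A).
Proof.
  eapply ld_mp'; [eapply ld_mp'; [apply ld_ax', (lp_S A (LImp A A) A)|apply ld_ax', lp_K1]|apply ld_ax', (lp_K1 A A)].
Qed.

Lemma lded H A B : lder (A :: H) B -> lder H (LImp A B).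
Proof.
  induction 1 as [C HC|C HC|C D _ IH1 _ IH2].
  - destruct HC as [<-|HC]; [apply lder_I|].
    eapply ld_mp'; [apply ld_ax', lp_K1|apply ld_hyp; auto].
  - eapply ld_mp'; [apply ld_ax', lp_K1|apply ld_ax'; auto].
  - eapply ld_mp'; [eapply ld_mp'; [apply ld_ax', lp_S|exact IH1]|exact IH2].
Qed.

Lemma lder_thm CS A : lder [] A -> lp_deriv CS A.
Proof.
  induction 1 as [C []|C HC|C D _ IH1 _ IH2].
  - apply ld_ax; auto.
  - eapply ld_mp; eauto.
Qed.

Lemma lweak H A H' : lder H A -> incl H H' -> lder H' A.
Proof. induction 1; intros Hi; [apply ld_hyp; auto|apply ld_ax'; auto|eapply ld_mp'; eauto]. Qed.

Lemma lpB P x y : lp_nonselfref_provable (B_ex P x y).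
Proof.
  exists (fun _ _ => False). split; [intros c A []|]. split.
  - intros [n [c [F [Hn [HF _]]]]]. apply (HF 0 Hn).
  - apply lder_thm. unfold B_ex. apply lded. unfold lneg at 1. apply lded.
    set (C := land (LAtom P) (lneg (LPf (LApp (LVar y) (LVar x)) (LAtom P)))).
    set (H0 := [LPf (LVar x) C; LPf (LVar y) (LImp C (LAtom P))]).
    assert (HbP : lder H0 (LPf (LApp (LVar y) (LVar x)) (LAtom P))).
    { eapply ld_mp'; [eapply ld_mp'; [apply ld_ax', lp_A2|apply ld_hyp; simpl; auto]|apply ld_hyp; simpl; auto]. }
    assert (HC : lder H0 C).
    { eapply ld_mp'; [apply ld_ax', lp_A1|apply ld_hyp; simpl; auto]. }
    eapply ld_mp'; [exact HC|].
    apply lded. change (lder (LAtom P :: H0) (LImp (lneg (LPf (LApp (LVar y) (LVar x)) (LAtom P))) LBot)).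
    apply lded. apply (ld_mp' _ (LPf (LApp (LVar y) (LVar x)) (LAtom P))); [apply ld_hyp; simpl; auto|].
    eapply lweak; [exact HbP|]. intros z Hz; unfold H0 in Hz; simpl in *; tauto.
Qed.

Theorem mainTheorem11 :
  (exists (A : mform) (B : lform),
      s4_thm A /\ ~ has_pcf_g3s_proof A /\ forget B = A /\ lp_nonselfref_provable B) /\
  (forall (P x y : nat), x <> y ->
      s4_thm (A_ex P) /\ ~ has_pcf_g3s_proof (A_ex P) /\
      forget (B_ex P x y) = A_ex P /\ lp_nonselfref_provable (B_ex P x y)).
Proof.
  assert (H : forall P x y : nat, s4_thm (A_ex P) /\ ~ has_pcf_g3s_proof (A_ex P) /\
      forget (B_ex P x y) = A_ex P /\ lp_nonselfref_provable (B_ex P x y)).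
  { intros P x y. repeat split; [apply s4A|apply no_pcf|apply lpB]. }
  split; [|intros; apply H].
  exists (A_ex 0), (B_ex 0 0 1). apply H.
Qed.
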